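(* Let $\mathscr H$ be a complex Hilbert space and $\mathbf{S}=(S_1,\dots,S_d)$, $\mathbf{T}=(T_1,\dots,T_d)\in\mathbb{B}(\mathscr H)^d$ with $S_kT_k=T_kS_k$ for all $k=1,\dots,d$. Then $$w_e(\mathbf{S}\mathbf{T})\le 2\sqrt{d}\,w_e(\mathbf{S})\,w_e(\mathbf{T}).$$
   Context: $\mathbb{B}(\mathscr H)$ denotes the bounded linear operators on $\mathscr H$. For $\mathbf{T}\in\mathbb{B}(\mathscr H)^d$, $w_e(\mathbf{T})=\sup\{(\sum_{k=1}^d|\langle T_kx,x\rangle|^2)^{1/2}: \|x\|=1\}$. Products are componentwise: $\mathbf{S}\mathbf{T}=(S_1T_1,\dots,S_dT_d)$. *)

(* Defs.v *)
From HB Require Import structures.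
From mathcomp Require Import all_boot all_order all_algebra.
From mathcomp Require Import complex.
From mathcomp Require Import all_classical all_reals.
Set Implicit Arguments. Unset Strict Implicit. Unset Printing Implicit Defensive.
Import Order.TTheory GRing.Theory Num.Theory.
Local Open Scope ring_scope.
Local Open Scope classical_set_scope.

Section Hilbert.
Variables (R : realType) (H : lmodType R[i]) (ip : H -> H -> R[i]).

Definition is_inner_product : Prop :=
  [/\ (forall (a : R[i]) (x y z : H), ip (a *: x + y) z = a * ip x z + ip y z),
      (forall x y : H, ip y x = conjc (ip x y)),
      (forall x : H, 0 <= ip x x) &
      (forall x : H, ip x x = 0 -> x = 0)].

Definition hnorm (x : H) : R := Num.sqrt (complex.Re (ip x x)).

Definition hcomplete : Prop :=
  forall u : nat -> H,
    (forall e : R, 0 < e -> exists N : nat, forall m n : nat,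
        (N <= m)%N -> (N <= n)%N -> hnorm (u m - u n) < e) ->
    exists l : H, forall e : R, 0 < e -> exists N : nat, forall n : nat,
        (N <= n)%N -> hnorm (u n - l) < e.

Definition is_hilbert_space : Prop := is_inner_product /\ hcomplete.

Definition bounded_op (A : H -> H) : Prop :=
  (forall (a : R[i]) (x y : H), A (a *: x + y) = a *: A x + A y) /\
  exists C : R, forall x : H, hnorm (A x) <= C * hnorm x.

Definition cmod (z : R[i]) : R := complex.Re `|z|.

Definition euclid_op_radius (d : nat) (T : 'I_d -> H -> H) : R :=
  sup [set Num.sqrt (\sum_(k < d) cmod (ip (T k x) x) ^+ 2) | x in [set x : H | hnorm x = 1]].

End Hilbert.

(* Main.v *)
Require Import Defs.
From HB Require Import structures.
From mathcomp Require Import all_boot all_order all_algebra.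
From mathcomp Require Import complex.
From mathcomp Require Import all_classical all_reals.
From mathcomp Require Import ring lra.
Import Order.TTheory GRing.Theory Num.Theory.
Local Open Scope ring_scope.

Local Notation Re := complex.Re.
Local Notation Im := complex.Im.

Section CX.
Local Open Scope complex_scope.
Context {R : realType}.
Implicit Types (z w : R[i]) (r : R).

Lemma ReD z w : Re (z + w) = Re z + Re w. Proof. by case: z; case: w. Qed.
Lemma ImD z w : Im (z + w) = Im z + Im w. Proof. by case: z; case: w. Qed.
Lemma ReN z : Re (- z) = - Re z. Proof. by case: z. Qed.
Lemma ImN z : Im (- z) = - Im z. Proof. by case: z. Qed.
Lemma ReB z w : Re (z - w) = Re z - Re w. Proof. by rewrite ReD ReN. Qed.
Lemma ImB z w : Im (z - w) = Im z - Im w. Proof. by rewrite ImD ImN. Qed.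
Lemma ReCM r z : Re (r%:C * z) = r * Re z.
Proof. by case: z => a b /=; rewrite mul0r subr0. Qed.
Lemma ImCM r z : Im (r%:C * z) = r * Im z.
Proof. by case: z => a b /=; rewrite mul0r addr0. Qed.
Lemma Rei z : Re ('i * z) = - Im z.
Proof. by case: z => a b /=; rewrite !mul0r mul1r sub0r. Qed.
Lemma ReJ z : Re (conjc z) = Re z. Proof. by case: z. Qed.
Lemma cjD z w : conjc (z + w) = conjc z + conjc w. Proof. by rewrite rmorphD. Qed.
Lemma cjM z w : conjc (z * w) = conjc z * conjc w. Proof. by rewrite rmorphM. Qed.
Lemma cjN z : conjc (- z) = - conjc z. Proof. by rewrite rmorphN. Qed.
Lemma cjC r : conjc (r%:C) = r%:C. Proof. exact: conjc_real. Qed.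
Lemma ii : 'i * 'i = -1 :> R[i].
Proof. by rewrite -expr2 sqr_i. Qed.
Lemma icj : 'i * conjc 'i = 1 :> R[i].
Proof. by apply/eqP; rewrite eq_complex /=; apply/andP; split; apply/eqP; ring. Qed.

Lemma cmodE z : cmod z = Num.sqrt (Re z ^+ 2 + Im z ^+ 2).
Proof. by rewrite /cmod normc_def. Qed.
Lemma cmod_ge0 z : 0 <= cmod z. Proof. by rewrite cmodE sqrtr_ge0. Qed.
Lemma cmod0 : cmod (0 : R[i]) = 0. Proof. by rewrite /cmod normr0. Qed.
Lemma Re_le_cmod z : `|Re z| <= cmod z.
Proof. by rewrite cmodE -sqrtr_sqr ler_wsqrtr // lerDl sqr_ge0. Qed.
Lemma Im_le_cmod z : `|Im z| <= cmod z.
Proof. by rewrite cmodE -sqrtr_sqr ler_wsqrtr // lerDr sqr_ge0. Qed.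
Lemma cmod_le z : cmod z <= `|Re z| + `|Im z|.
Proof.
rewrite cmodE; set a := Re z; set b := Im z.
have ha := normr_ge0 a; have hb := normr_ge0 b.
have e : Num.sqrt ((`|a| + `|b|) ^+ 2) = `|a| + `|b|.
  by rewrite sqrtr_sqr ger0_norm // addr_ge0.
rewrite -e; apply: ler_wsqrtr.
rewrite -(real_normK (num_real a)) -(real_normK (num_real b)).
set x := `|a|; set y := `|b|.
have hxy : 0 <= x * y by rewrite mulr_ge0.
rewrite sqrrD; lra.
Qed.
Lemma cmodCM r z : 0 <= r -> cmod (r%:C * z) = r * cmod z.
Proof.
move=> hr; rewrite !cmodE ReCM ImCM !exprMn -mulrDr sqrtrM ?sqr_ge0 //.
by rewrite sqrtr_sqr ger0_norm.
Qed.
Lemma cmodU z l : `|l| = 1 -> cmod (l * z) = cmod z.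
Proof. by move=> h; rewrite /cmod normrM h mul1r. Qed.
Lemma CM r s : r%:C * s%:C = (r * s)%:C.
Proof. by apply/eqP; rewrite eq_complex /= !mulr0 !mul0r subr0 addr0 !eqxx. Qed.
End CX.

Section IP.
Local Open Scope complex_scope.
Variables (R : realType) (H : lmodType R[i]) (ip : H -> H -> R[i]).
Hypothesis hip : is_inner_product ip.
Implicit Types (x y z u v : H) (a c : R[i]) (r : R).

Lemma ipL a x y z : ip (a *: x + y) z = a * ip x z + ip y z.
Proof. by case: hip => h _ _ _; apply: h. Qed.
Lemma ipC x y : ip y x = conjc (ip x y).
Proof. by case: hip => _ h _ _; apply: h. Qed.
Lemma ip_ge0 x : 0 <= ip x x.
Proof. by case: hip => _ _ h _; apply: h. Qed.
Lemma ip_eq0 x : ip x x = 0 -> x = 0.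
Proof. by case: hip => _ _ _ h; apply: h. Qed.

Lemma ip0l z : ip 0 z = 0.
Proof.
have h := ipL 1 0 0 z; rewrite scale1r addr0 mul1r in h.
by apply: (addrI (ip 0 z)); rewrite addr0 -h.
Qed.
Lemma ipDl x y z : ip (x + y) z = ip x z + ip y z.
Proof. by have := ipL 1 x y z; rewrite scale1r mul1r. Qed.
Lemma ipZl a x z : ip (a *: x) z = a * ip x z.
Proof. by have := ipL a x 0 z; rewrite !addr0 ip0l addr0. Qed.
Lemma ipNl x z : ip (- x) z = - ip x z.
Proof. by rewrite -scaleN1r ipZl mulN1r. Qed.
Lemma ipBl x y z : ip (x - y) z = ip x z - ip y z.
Proof. by rewrite ipDl ipNl. Qed.
Lemma ipDr z x y : ip z (x + y) = ip z x + ip z y.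
Proof. by rewrite ipC ipDl cjD -!ipC. Qed.
Lemma ipZr z a x : ip z (a *: x) = conjc a * ip z x.
Proof. by rewrite ipC ipZl cjM -ipC. Qed.
Lemma ipNr z x : ip z (- x) = - ip z x.
Proof. by rewrite ipC ipNl cjN -ipC. Qed.
Lemma ipBr z x y : ip z (x - y) = ip z x - ip z y.
Proof. by rewrite ipDr ipNr. Qed.
Lemma ip0r z : ip z 0 = 0.
Proof. by rewrite ipC ip0l; apply: conjc0. Qed.

Definition rg x y := Re (ip x y).
Definition nn x := rg x x.

Lemma rgC x y : rg y x = rg x y.
Proof. by rewrite /rg ipC ReJ. Qed.
Lemma rgDl x y z : rg (x + y) z = rg x z + rg y z.
Proof. by rewrite /rg ipDl ReD. Qed.
Lemma rgDr z x y : rg z (x + y) = rg z x + rg z y.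
Proof. by rewrite /rg ipDr ReD. Qed.
Lemma rgBl x y z : rg (x - y) z = rg x z - rg y z.
Proof. by rewrite /rg ipBl ReB. Qed.
Lemma rgBr z x y : rg z (x - y) = rg z x - rg z y.
Proof. by rewrite /rg ipBr ReB. Qed.
Lemma rgNl x z : rg (- x) z = - rg x z.
Proof. by rewrite /rg ipNl ReN. Qed.
Lemma rgNr z x : rg z (- x) = - rg z x.
Proof. by rewrite /rg ipNr ReN. Qed.
Lemma rgZl r x z : rg (r%:C *: x) z = r * rg x z.
Proof. by rewrite /rg ipZl ReCM. Qed.
Lemma rgZr r z x : rg z (r%:C *: x) = r * rg z x.
Proof. by rewrite /rg ipZr cjC ReCM. Qed.

Lemma nn_ge0 x : 0 <= nn x.
Proof. by have := ip_ge0 x; rewrite lecE => /andP[_]. Qed.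
Lemma ipxx x : ip x x = (nn x)%:C.
Proof.
have := ip_ge0 x; rewrite lecE => /andP[/eqP hi _].
by rewrite [LHS]complexE hi (_ : Im 0 = 0) // mulr0 addr0.
Qed.
Lemma nn_eq0 x : nn x = 0 -> x = 0.
Proof. by move=> h; apply: ip_eq0; rewrite ipxx h. Qed.
Lemma hnormE x : hnorm ip x = Num.sqrt (nn x). Proof. by []. Qed.
Lemma hnorm1 x : hnorm ip x = 1 -> nn x = 1.
Proof.
move=> h; have := sqr_sqrtr (nn_ge0 x); rewrite -hnormE h expr1n.
by move=> <-.
Qed.
Lemma nnZ r x : nn (r%:C *: x) = r ^+ 2 * nn x.
Proof. by rewrite /nn rgZl rgZr mulrA expr2. Qed.

Definition lin (A : H -> H) := forall a x y, A (a *: x + y) = a *: A x + A y.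

Section Lin.
Variable A : H -> H.
Hypothesis hA : lin A.
Lemma lin0 : A 0 = 0.
Proof.
have h := hA 1 0 0; rewrite scale1r addr0 scale1r in h.
by apply: (addrI (A 0)); rewrite addr0 -h.
Qed.
Lemma linD x y : A (x + y) = A x + A y.
Proof. by have := hA 1 x y; rewrite !scale1r. Qed.
Lemma linZ a x : A (a *: x) = a *: A x.
Proof. by have := hA a x 0; rewrite !addr0 lin0 addr0. Qed.
Lemma linN x : A (- x) = - A x.
Proof. by rewrite -scaleN1r linZ scaleN1r. Qed.
Lemma linB x y : A (x - y) = A x - A y.
Proof. by rewrite linD linN. Qed.
End Lin.
Arguments lin0 {A}. Arguments linD {A}. Arguments linZ {A}. Arguments linN {A}. Arguments linB {A}.

Lemma pw (T : H -> H) (p : R) : lin T -> 0 < p ->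
  (forall y, `|rg (T y) y| <= p * nn y) ->
  forall x, rg (T (T x)) x <= p ^+ 2 * nn x.
Proof.
move=> hT hp hb x.
have hu := hb (p%:C *: x + T x).
have hv := hb (p%:C *: x - T x).
rewrite (linD hT) (linZ hT) in hu.
rewrite (linB hT) (linZ hT) in hv.
rewrite /nn !(rgDl, rgDr, rgBl, rgBr, rgNl, rgNr, rgZl, rgZr) in hu hv.
rewrite [rg x (T x)]rgC in hu hv.
move: hu hv. rewrite !ler_norml => /andP[_ hu] /andP[hv _].
rewrite /nn.
nra.
Qed.


Lemma pw_i (T : H -> H) (p : R) : lin T -> 0 < p ->
  (forall y, `|Im (ip (T y) y)| <= p * nn y) ->
  forall x, - rg (T (T x)) x <= p ^+ 2 * nn x.
Proof.
move=> hT hp hb x.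
pose T' := fun y => 'i *: T y.
have hT' : lin T'.
  move=> c u v; rewrite /T' hT scalerDr !scalerA mulrC //.
have hb' : forall y, `|rg (T' y) y| <= p * nn y.
  by move=> y; rewrite /rg /T' ipZl Rei normrN.
have := pw _ _ hT' hp hb' x.
by rewrite /T' (linZ hT) scalerA ii scaleN1r rgNl.
Qed.

Lemma prodRe (A B : H -> H) (a b : R) : lin A -> lin B ->
  (forall x, A (B x) = B (A x)) ->
  0 < a -> 0 < b -> (forall y, cmod (ip (A y) y) <= a * nn y) ->
  (forall y, cmod (ip (B y) y) <= b * nn y) ->
  forall x, rg (A (B x)) x <= 2 * a * b * nn x.
Proof.
move=> hA hB hAB ha hb bA bB x.
set t := Num.sqrt (b / a).
have ht : 0 < t by rewrite sqrtr_gt0 divr_gt0.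
have ht2 : t ^+ 2 = b / a by rewrite sqr_sqrtr // ltW // divr_gt0.
set s := t^-1.
have hs : 0 < s by rewrite invr_gt0.
have hts : t * s = 1 by rewrite mulfV // gt_eqF.
set p := t * a + s * b.
have hp : 0 < p by rewrite addr_gt0 // mulr_gt0.
have hp2 : p ^+ 2 = 4 * a * b.
  have e1 : t ^+ 2 * a ^+ 2 = a * b.
    by rewrite ht2; field; rewrite gt_eqF.
  have e2 : s ^+ 2 * b ^+ 2 = a * b.
    by rewrite /s exprVn ht2 invf_div; field; rewrite gt_eqF.
  have -> : p ^+ 2 = t ^+ 2 * a ^+ 2 + 2 * (t * s) * (a * b) + s ^+ 2 * b ^+ 2.
    by rewrite /p; ring.
  by rewrite e1 e2 hts; ring.
pose P := fun y => t%:C *: A y + s%:C *: B y.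
pose Q := fun y => t%:C *: A y - s%:C *: B y.
have hP : lin P.
  move=> c u v; rewrite /P hA hB !scalerDr !scalerA [t%:C * c]mulrC [s%:C * c]mulrC.
  by rewrite addrACA.
have hQ : lin Q.
  move=> c u v; rewrite /Q /= hA hB !scalerDr !scalerN !scalerA [t%:C * c]mulrC [s%:C * c]mulrC.
  rewrite opprD addrACA; done.
have bP : forall y, `|rg (P y) y| <= p * nn y.
  move=> y; rewrite /P rgDl !rgZl /p mulrDl.
  apply: (le_trans (ler_normD _ _)); apply: lerD;
    rewrite normrM gtr0_norm // -mulrA ler_pM2l //;
    rewrite /rg; (apply: le_trans; first exact: Re_le_cmod); by [exact: bA | exact: bB].
have bQ : forall y, `|Im (ip (Q y) y)| <= p * nn y.
  move=> y; rewrite /Q ipBl !ipZl ImB !ImCM /p mulrDl.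
  apply: (le_trans (ler_normB _ _)); apply: lerD;
    rewrite normrM gtr0_norm // -mulrA ler_pM2l //;
    (apply: le_trans; first exact: Im_le_cmod); by [exact: bA | exact: bB].
have h1 := pw _ _ hP hp bP x.
have h2 := pw_i _ _ hQ hp bQ x.
rewrite /P /Q in h1 h2.
rewrite !(linD hA, linB hA, linN hA, linZ hA, linD hB, linB hB, linN hB, linZ hB) in h1 h2.
rewrite -!hAB in h1 h2.
rewrite !(rgDl, rgBl, rgNl, rgZl) in h1 h2.
rewrite hp2 in h1 h2.
set al := rg (A (A x)) x in h1 h2.
set be := rg (A (B x)) x in h1 h2 *.
set ga := rg (B (B x)) x in h1 h2.
have e : t * (t * al + s * be) + s * (t * be + s * ga)
   - (t * (t * al - s * be) - s * (t * be - s * ga)) = 4 * (t * s) * be by ring.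
rewrite hts mulr1 in e.
have hn := nn_ge0 x.
lra.
Qed.

Lemma prodmod (A B : H -> H) (a b : R) : lin A -> lin B ->
  (forall x, A (B x) = B (A x)) ->
  0 < a -> 0 < b -> (forall y, cmod (ip (A y) y) <= a * nn y) ->
  (forall y, cmod (ip (B y) y) <= b * nn y) ->
  forall x, cmod (ip (A (B x)) x) <= 2 * a * b * nn x.
Proof.
move=> hA hB hAB ha hb bA bB x.
set z := ip (A (B x)) x.
have [z0|nz] := eqVneq z 0.
  rewrite z0 cmod0; apply: mulr_ge0; last exact: nn_ge0.
  by apply: mulr_ge0; [apply: mulr_ge0 | ]; apply: ltW.
set l := conjc z / `|z|.
have nz' : `|z| != 0 by rewrite normr_eq0.
have hl : `|l| = 1.
  by rewrite /l normrM normcJ normfV normr_id mulfV.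
pose A' := fun y => l *: A y.
have hA' : lin A'.
  by move=> c u v; rewrite /A' hA scalerDr !scalerA mulrC.
have hAB' : forall y, A' (B y) = B (A' y).
  by move=> y; rewrite /A' hAB (linZ hB).
have bA' : forall y, cmod (ip (A' y) y) <= a * nn y.
  by move=> y; rewrite /A' ipZl cmodU.
have := prodRe _ _ _ _ hA' hB hAB' ha hb bA' bB x.
rewrite /rg /A' ipZl -/z.
have -> : l * z = `|z|.
  by rewrite /l mulrAC [conjc z * z]mulrC -sqr_normc expr2 mulfK.
by [].
Qed.

Lemma prod0 (A B : H -> H) (a b : R) : lin A -> lin B ->
  (forall x, A (B x) = B (A x)) ->
  0 <= a -> 0 <= b -> (forall y, cmod (ip (A y) y) <= a * nn y) ->
  (forall y, cmod (ip (B y) y) <= b * nn y) ->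
  forall x, nn x = 1 -> cmod (ip (A (B x)) x) <= 2 * a * b.
Proof.
move=> hA hB hAB ha hb bA bB x hx.
apply/ler_addgt0Pr => e he.
set K := a + b + 1.
have hK : 0 < K by rewrite /K; lra.
set ep := e / (4 * K + e).
have hden : 0 < 4 * K + e by lra.
have hep : 0 < ep by rewrite /ep divr_gt0.
have hepe : ep * (4 * K + e) = e by rewrite /ep divfK // gt_eqF.
have bA2 : forall y, cmod (ip (A y) y) <= (a + ep) * nn y.
  move=> y; apply: (le_trans (bA y)); apply: ler_wpM2r; [exact: nn_ge0 | lra].
have bB2 : forall y, cmod (ip (B y) y) <= (b + ep) * nn y.
  move=> y; apply: (le_trans (bB y)); apply: ler_wpM2r; [exact: nn_ge0 | lra].
have := prodmod _ _ _ _ hA hB hAB _ _ bA2 bB2 x.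
rewrite hx mulr1 => h.
have h1 : (1 - ep) * e = 4 * (ep * K).
  by rewrite mulrBl mul1r -{1}hepe; ring.
have hep1 : ep <= 1 by nra.
have f1 : ep * ep <= ep by nra.
have f2 : 4 * (ep * K) <= e by nra.
have f3 : 2 * (a + ep) * (b + ep) = 2 * a * b + 2 * (ep * K) - 2 * ep + 2 * (ep * ep).
  by rewrite /K; ring.
apply: (le_trans (h _ _)); [lra | lra | lra].
Qed.

Lemma qhom (A : H -> H) (a : R) : lin A ->
  (forall u, nn u = 1 -> cmod (ip (A u) u) <= a) ->
  forall y, cmod (ip (A y) y) <= a * nn y.
Proof.
move=> hA hb y.
have [y0|ny] := eqVneq (nn y) 0.
  have -> : y = 0 := nn_eq0 _ y0.
  by rewrite (lin0 hA) ip0l cmod0 /nn /rg ip0l (_ : Re 0 = 0) // mulr0.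
have hr : 0 < nn y by rewrite lt_neqAle eq_sym ny nn_ge0.
set r := nn y in hr *.
set c := (Num.sqrt r)^-1.
have hc : 0 < c by rewrite invr_gt0 sqrtr_gt0.
have hc2 : c * c * r = 1.
  by rewrite -expr2 /c exprVn sqr_sqrtr ?ltW // mulVf // gt_eqF.
have hu := hb (c%:C *: y).
rewrite nnZ expr2 -/r hc2 in hu.
have := hu erefl.
rewrite (linZ hA) ipZl ipZr cjC mulrA CM cmodCM; last by rewrite mulr_ge0 // ltW.
move=> h.
have hw := cmod_ge0 (ip (A y) y).
nra.
Qed.

Lemma rg_bound x y : `|rg x y| <= (nn x + nn y) / 2.
Proof.
have p1 := nn_ge0 (x + y); have p2 := nn_ge0 (x - y).
rewrite /nn !(rgDl, rgDr, rgBl, rgBr, rgNl, rgNr) [rg y x]rgC in p1 p2.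
rewrite ler_norml; apply/andP; split; rewrite /nn; lra.
Qed.

Lemma cs_bound x y : cmod (ip x y) <= nn x + nn y.
Proof.
apply: (le_trans (cmod_le _)).
have h1 := rg_bound x y.
have h2 := rg_bound ('i *: x) y.
have e1 : nn ('i *: x) = nn x by rewrite /nn /rg ipZl ipZr mulrA icj mul1r.
have e2 : rg ('i *: x) y = - Im (ip x y) by rewrite /rg ipZl Rei.
rewrite e1 e2 normrN in h2.
rewrite /rg in h1; lra.
Qed.

Lemma bnd_unit (A : H -> H) : bounded_op ip A ->
  exists C : R, forall u, nn u = 1 -> cmod (ip (A u) u) <= C.
Proof.
case=> _ [C hC]; exists (C ^+ 2 + 1) => u hu.
apply: (le_trans (cs_bound _ _)); rewrite hu lerD2r.
have := hC u; rewrite !hnormE hu sqrtr1 mulr1 => h.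
have h0 := sqrtr_ge0 (nn (A u)).
have := sqr_sqrtr (nn_ge0 (A u)) => e.
rewrite -e; nra.
Qed.

Lemma sup_ge0 (E : set R) : (forall q : R, E q -> 0 <= q) -> 0 <= sup E.
Proof.
move=> h; have [hs|hs] := pselect (has_sup E).
  case: (hs) => [[q Eq] _]; apply: (le_trans (h q Eq)).
  exact: (sup_upper_bound hs Eq).
by rewrite sup_out.
Qed.

Lemma we_ge0 d (S : 'I_d -> H -> H) : 0 <= euclid_op_radius ip S.
Proof. by apply: sup_ge0 => _ [x _ <-]; apply: sqrtr_ge0. Qed.

Lemma we_bound d (S : 'I_d -> H -> H) : (forall k, bounded_op ip (S k)) ->
  forall k u, nn u = 1 -> cmod (ip (S k u) u) <= euclid_op_radius ip S.
Proof.
move=> hS k u hu.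
have [C hC] := choice (fun k => bnd_unit _ (hS k)).
rewrite /euclid_op_radius; set E := (X in sup X).
have hub : has_ubound E.
  exists (Num.sqrt (\sum_(j < d) C j ^+ 2)).
  move=> _ [x hx <-]; apply: ler_wsqrtr; apply: ler_sum => j _.
  have hx1 : nn x = 1 by apply: hnorm1.
  have h0 := cmod_ge0 (ip (S j x) x).
  have h1 := hC j x hx1.
  nra.
apply: le_trans; last first.
  apply: (ub_le_sup hub); exists u => //.
  by rewrite /= hnormE hu sqrtr1.
rewrite -[cmod _]ger0_norm ?cmod_ge0 // -sqrtr_sqr; apply: ler_wsqrtr.
rewrite (bigD1 k) //= lerDl; apply: sumr_ge0 => j _; exact: sqr_ge0.
Qed.

End IP.

Theorem mainTheorem6 (R : realType) (H : lmodType R[i]) (ip : H -> H -> R[i])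
  (hH : is_hilbert_space ip) (d : nat) (S T : 'I_d -> H -> H)
  (hS : forall k, bounded_op ip (S k)) (hT : forall k, bounded_op ip (T k))
  (hST : forall k x, S k (T k x) = T k (S k x)) :
  euclid_op_radius ip (fun k => S k \o T k)
    <= 2 * Num.sqrt (d%:R : R) * euclid_op_radius ip S * euclid_op_radius ip T.
Proof.
case: hH => hip _.
have lS : forall k, lin _ _ (S k) by move=> k; case: (hS k).
have lT : forall k, lin _ _ (T k) by move=> k; case: (hT k).
have bS := we_bound _ _ _ hip _ _ hS.
have bT := we_bound _ _ _ hip _ _ hT.
have ha : 0 <= euclid_op_radius ip S by apply: we_ge0.
have hb : 0 <= euclid_op_radius ip T by apply: we_ge0.
set a := euclid_op_radius ip S in bS ha *.
set b := euclid_op_radius ip T in bT hb *.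
have key : forall x, nn _ _ ip x = 1 -> forall k, cmod (ip (S k (T k x)) x) <= 2 * a * b.
  move=> x hx k.
  apply: (prod0 _ _ _ hip _ _ _ _ (lS k) (lT k) (hST k) ha hb _ _ x hx).
    exact: (qhom _ _ _ hip _ _ (lS k) (bS k)).
  exact: (qhom _ _ _ hip _ _ (lT k) (bT k)).
have hR : 0 <= 2 * Num.sqrt (d%:R : R) * a * b.
  by rewrite !mulr_ge0 // sqrtr_ge0.
rewrite {1}/euclid_op_radius.
have [[x0 hx0]|hne] := pselect (exists x : H, hnorm ip x = 1).
  apply: ge_sup.
    by exists (Num.sqrt (\sum_(k < d) cmod (ip (S k (T k x0)) x0) ^+ 2)); exists x0.
  move=> _ [y hy <-] /=.
  have hy1 := hnorm1 _ _ _ hip _ hy.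
  have -> : 2 * Num.sqrt (d%:R : R) * a * b = Num.sqrt (d%:R * (2 * a * b) ^+ 2).
    rewrite sqrtrM ?ler0n // sqrtr_sqr ger0_norm; first by ring.
    by rewrite !mulr_ge0.
  apply: ler_wsqrtr.
  have -> : d%:R * (2 * a * b) ^+ 2 = \sum_(k < d) (2 * a * b) ^+ 2.
    by rewrite sumr_const card_ord mulr_natl.
  apply: ler_sum => k _.
  have h0 := cmod_ge0 (ip (S k (T k y)) y).
  have h1 := key y hy1 k.
  nra.
rewrite sup_out //.
by move=> [[_ [y hy _]] _]; apply: hne; exists y.
Qed.
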